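(* Consider the scalar Gaussian wiretap channel with amplitude constraint $\mathsf{R}>0$ and $0<\sigma_1^2<\sigma_2^2$, let $X^\star$ be a secrecy-capacity-achieving input, and let $\breve{h}:\mathbb{C}\to\mathbb{C}$ be the complex extension (defined in the context) of the function $h(y)=\sigma_1^2 f_{Y_1}(y)g'(y)$. Then for every \[ \mathsf{B} \ge \mathsf{R} \frac{\sigma_2^2+\sigma_1^2}{ \sigma_2^2-\sigma_1^2}, \] we have \[ \max_{|z|\le \mathsf{B}} |\breve{h}(z)| \ge \left( c_1 \mathsf{B} - c_2 \mathsf{R} \right) \frac{ \exp\left( -\frac{(\mathsf{B}+\mathsf{R})^2}{2\sigma_1^2} \right) }{\sqrt{2\pi \sigma_1^2}} , \] where $c_1=1-\frac{\sigma_1^2 }{\sigma_2^2}$ and $c_2=1 + \frac{\sigma_1^2 }{\sigma_2^2}$.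
   Context: Scalar Gaussian wiretap channel: $Y_i=X+N_i$, $N_i\sim\mathcal{N}(0,\sigma_i^2)$, $i=1,2$, mutually independent with $X$. $C_s(\sigma_1^2,\sigma_2^2,\mathsf{R},1)=\max I(X;Y_1)-I(X;Y_2)$ over distributions of $X$ on $[-\mathsf{R},\mathsf{R}]$; $X^\star$ is a maximizer. $\phi_\sigma(w)=\frac{1}{\sqrt{2\pi\sigma^2}}e^{-w^2/(2\sigma^2)}$, and $f_{Y_i}(w)=\mathbb{E}[\phi_{\sigma_i}(w-X^\star)]$. $N\sim\mathcal{N}(0,\sigma_2^2-\sigma_1^2)$ independent of $X^\star$. $g(y)=\mathbb{E}\left[\log\frac{f_{Y_2}(y+N)}{f_{Y_1}(y)}\right]$ and $h(y)=\sigma_1^2 f_{Y_1}(y)g'(y)$, which equals $\sigma_1^2 f_{Y_1}(y)\left(\frac{\mathbb{E}_N[\mathbb{E}[X^\star|Y_2=y+N]]-y}{\sigma_2^2}-\frac{\mathbb{E}[X^\star|Y_1=y]-y}{\sigma_1^2}\right)$ and also $\frac{\sigma_1^2 f_{Y_1}(y)\mathbb{E}[N\log f_{Y_2}(y+N)]}{\sigma_2^2-\sigma_1^2}-\mathbb{E}[X^\star\phi_{\sigma_1}(y-X^\star)]+y f_{Y_1}(y)$. The complex extension $\breve{h}(z)$ is obtained by replacing $y$ by $z\in\mathbb{C}$ in this last expression, with $\phi_\sigma$ and $f_{Y_i}$ extended to complex arguments by the same formulas and $\log$ the principal branch. *)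

(* Defs.v *)
From mathcomp Require Import all_boot all_order all_algebra.
From mathcomp Require Import all_classical all_reals all_analysis.
From mathcomp Require Import complex.
Import Order.TTheory GRing.Theory Num.Theory.
Set Implicit Arguments. Unset Strict Implicit. Unset Printing Implicit Defensive.
Local Open Scope ring_scope.
Local Open Scope complex_scope.

Section WiretapDefs.
Variable R : realType.

Definition cabs (z : R[i]) : R := Num.sqrt (complex.Re z ^+ 2 + complex.Im z ^+ 2).

(* Gaussian density with variance v : phi_sigma, sigma^2 = v *)
Definition phi (v : R) (w : R) : R :=
  expR (- (w ^+ 2) / (2 * v)) / Num.sqrt (2 * pi * v).

Definition fY (mu : probability R R) (v : R) (y : R) : R :=
  \int[mu]_x phi v (y - x).

Definition MI (mu : probability R R) (v : R) : R :=
  \int[mu]_x (\int[lebesgue_measure]_y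
                 (phi v (y - x) * ln (phi v (y - x) / fY mu v y))).

Definition supported (mu : probability R R) (Rr : R) : Prop :=
  mu `[- Rr, Rr]%classic = 1%E.

Definition secrecy_obj (mu : probability R R) (v1 v2 : R) : R :=
  MI mu v1 - MI mu v2.

Definition secrecy_maximizer (mu : probability R R) (v1 v2 Rr : R) : Prop :=
  supported mu Rr /\
  forall nu : probability R R, supported nu Rr ->
    secrecy_obj nu v1 v2 <= secrecy_obj mu v1 v2.

Definition expC (z : R[i]) : R[i] :=
  (expR (complex.Re z) * cos (complex.Im z)) +i* (expR (complex.Re z) * sin (complex.Im z)).

(* principal argument in (-pi, pi]; Arg 0 := 0 (convention) *)
Definition ArgC (w : R[i]) : R :=
  if (complex.Re w == 0) && (complex.Im w == 0) then 0
  else if 0 <= complex.Im w then acos (complex.Re w / cabs w)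
  else - acos (complex.Re w / cabs w).

(* principal branch of the logarithm (Log 0 := 0 by convention) *)
Definition LogC (w : R[i]) : R[i] := (ln (cabs w)) +i* (ArgC w).

Definition phiC (v : R) (w : R[i]) : R[i] :=
  expC (- (w * w) / (2 * v)%:C) / (Num.sqrt (2 * pi * v))%:C.

Definition EC (mu : probability R R) (F : R -> R[i]) : R[i] :=
  (\int[mu]_x complex.Re (F x)) +i* (\int[mu]_x complex.Im (F x)).

Definition fYC (mu : probability R R) (v : R) (z : R[i]) : R[i] :=
  EC mu (fun x => phiC v (z - x%:C)).

Definition EN (v : R) (G : R -> R[i]) : R[i] :=
  (\int[lebesgue_measure]_n (complex.Re (G n) * phi v n))
  +i* (\int[lebesgue_measure]_n (complex.Im (G n) * phi v n)).

(* complex extension breve h of h = sigma1^2 f_{Y1} g' :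
   sigma1^2 f_{Y1}(z) E[N log f_{Y2}(z+N)] / (sigma2^2 - sigma1^2)
   - E[Xs phi_{sigma1}(z - Xs)] + z f_{Y1}(z),   N ~ N(0, sigma2^2 - sigma1^2) *)
Definition hC (mu : probability R R) (v1 v2 : R) (z : R[i]) : R[i] :=
  v1%:C * fYC mu v1 z * EN (v2 - v1) (fun n => n%:C * LogC (fYC mu v2 (z + n%:C)))
    / (v2 - v1)%:C
  - EC mu (fun x => x%:C * phiC v1 (z - x%:C))
  + z * fYC mu v1 z.

End WiretapDefs.

(* Main.v *)
Require Import Defs.
From mathcomp Require Import all_boot all_order all_algebra.
From mathcomp Require Import all_classical all_reals all_analysis.
From mathcomp Require Import complex.
From mathcomp Require Import ring lra measurable_realfun.
Import Order.TTheory GRing.Theory Num.Theory.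
Import numFieldNormedType.Exports.
Set Implicit Arguments. Unset Strict Implicit. Unset Printing Implicit Defensive.
Local Open Scope ring_scope.
Local Open Scope classical_set_scope.
Local Open Scope ring_scope.
Section phi_lemmas.
Context {R : realType}.
Implicit Types v w x y : R.

Lemma phi_ge0 v w : 0 <= phi v w.
Proof. by rewrite /phi divr_ge0 ?expR_ge0 ?sqrtr_ge0. Qed.

Lemma phi_gt0 v w : 0 < v -> 0 < phi v w.
Proof.
move=> v0; rewrite /phi divr_gt0 ?expR_gt0// sqrtr_gt0.
by rewrite mulr_gt0// mulr_gt0// pi_gt0.
Qed.

Lemma phi_le v x y : 0 < v -> x ^+ 2 <= y ^+ 2 -> phi v y <= phi v x.
Proof.
move=> v0 xy; rewrite /phi ler_wpM2r// ?invr_ge0 ?sqrtr_ge0// ler_expR.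
rewrite !mulNr lerN2 ler_pM2r// invr_gt0 mulr_gt0//.
Qed.

Lemma phi_ub v w : 0 < v -> phi v w <= (Num.sqrt (2 * pi * v))^-1.
Proof.
move=> v0; rewrite /phi ler_pdivrMr ?sqrtr_gt0 ?mulr_gt0 ?pi_gt0//.
rewrite mulVf ?gt_eqF ?sqrtr_gt0 ?mulr_gt0 ?pi_gt0//.
by rewrite -expR0 ler_expR mulNr oppr_le0 mulr_ge0 ?sqr_ge0// invr_ge0 mulr_ge0// ltW.
Qed.

Lemma measurable_phi v : measurable_fun setT (phi v).
Proof.
rewrite /phi; apply: measurable_funM => //=.
apply: measurableT_comp => //=; apply: measurable_funM => //=.
apply: measurableT_comp => //=; exact: measurable_funX.
Qed.

Lemma continuous_phi v : continuous (phi v).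
Proof.
move=> x; rewrite /phi; apply: cvgM; last exact: cvg_cst.
apply: (cvg_comp _ expR); last exact: continuous_expR.
apply: cvgM; last exact: cvg_cst.
apply: (@cvgN _ R^o).
exact: exprn_continuous.
Qed.

End phi_lemmas.
Section support.
Context {R : realType} (mu : probability R R) (Rr : R).
Hypothesis supp : supported mu Rr.
Local Notation D := (`[- Rr, Rr]%classic : set R).

Lemma muDc : mu (~` D) = 0%E.
Proof. by rewrite probability_setC// supp subee. Qed.

Lemma int_TD (f : R -> R) : measurable_fun setT f ->
  (\int[mu]_x (f x)%:E = \int[mu]_(x in D) (f x)%:E)%E.
Proof.
move=> mf.
have mD : measurable D by [].
have mDc : measurable (~` D) by exact: measurableC.
rewrite -[in LHS](setUv D) integral_setU//.
all: try (by rewrite setUv; exact/measurable_EFinP).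
all: try (exact/disj_setPCl).
rewrite [X in (_ + X)%E]null_set_integral ?adde0//.
- by apply/measurable_EFinP; exact: measurable_funTS.
- exact: muDc.
Qed.

Lemma Rint_TD (f : R -> R) : measurable_fun setT f ->
  \int[mu]_x f x = \int[mu]_(x in D) f x.
Proof. by move=> mf; rewrite /Rintegral int_TD. Qed.

Lemma integrable_D (f : R -> R) (M : R) : measurable_fun setT f ->
  (forall x, D x -> `|f x| <= M) -> mu.-integrable D (EFin \o f).
Proof.
move=> mf fM; apply: measurable_bounded_integrable => //.
- by apply: (le_lt_trans (probability_le1 _ _)) => //; exact: ltry.
- exact: measurable_funTS.
- exists M; split; first exact: num_real.
  move=> M' MM' x Dx /=; exact: le_trans (fM x Dx) (ltW MM').
Qed.

Lemma Rint_le (f g : R -> R) (Mf Mg : R) :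
  measurable_fun setT f -> measurable_fun setT g ->
  (forall x, D x -> `|f x| <= Mf) -> (forall x, D x -> `|g x| <= Mg) ->
  (forall x, D x -> f x <= g x) ->
  \int[mu]_x f x <= \int[mu]_x g x.
Proof.
move=> mf mg fM gM fg; rewrite !Rint_TD//.
apply: le_Rintegral => //; by [apply: integrable_D mf fM|apply: integrable_D mg gM].
Qed.

Lemma Rint_ge_cst (c : R) (g : R -> R) (Mg : R) :
  measurable_fun setT g -> (forall x, D x -> `|g x| <= Mg) ->
  (forall x, D x -> c <= g x) -> c <= \int[mu]_x g x.
Proof.
move=> mg gM cg; rewrite Rint_TD//.
have -> : c = \int[mu]_(x in D) (cst c x).
  rewrite Rintegral_cst//; rewrite -[LHS]mulr1; congr (_ * _).
  exact: (esym (congr1 fine supp)).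
apply: le_Rintegral => //.
- apply: (@integrable_D _ `|c|) => // x _; exact: measurable_cst.
- exact: integrable_D mg gM.
Qed.

End support.
Section fY_lemmas.
Context {R : realType} (mu : probability R R) (Rr : R).
Hypothesis supp : supported mu Rr.
Hypothesis Rr0 : 0 < Rr.
Local Notation D := (`[- Rr, Rr]%classic : set R).

Lemma measurable_phi_shift v w : measurable_fun setT (fun x : R => phi v (w - x)).
Proof.
apply: (measurableT_comp (measurable_phi v)).
exact: measurable_funB.
Qed.

Lemma Dnorm x : D x -> `|x| <= Rr.
Proof. by rewrite /= in_itv/= ler_norml. Qed.

Lemma fY_ge v w : 0 < v -> phi v (`|w| + Rr) <= fY mu v w.
Proof.
move=> v0; rewrite /fY.
apply: (@Rint_ge_cst _ mu Rr supp _ _ (Num.sqrt (2 * pi * v))^-1).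
- exact: measurable_phi_shift.
- by move=> x _; rewrite ger0_norm ?phi_ge0// phi_ub.
- move=> x /Dnorm xR; apply: phi_le => //.
  have h1 : `|w - x| <= `|w| + Rr.
    by rewrite (le_trans (ler_normB _ _))// lerD2l.
  have h2 : 0 <= `|w - x| by [].
  have h3 : (w - x) ^+ 2 = `|w - x| ^+ 2 by rewrite real_normK ?num_real.
  rewrite h3; nra.
Qed.

Lemma fY_gt0 v w : 0 < v -> 0 < fY mu v w.
Proof. by move=> v0; rewrite (lt_le_trans _ (fY_ge w v0))// phi_gt0. Qed.

Definition qq (v2 w : R) := (w + Rr) ^+ 2 / (2 * v2).
Definition mm (v2 w : R) := ln (fY mu v2 w) + qq v2 w.

Lemma mm_nd v2 : 0 < v2 -> {homo mm v2 : x y / x <= y}.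
Proof.
move=> v0 w w' ww'.
have key (u : R) : fY mu v2 u * expR (qq v2 u) =
    \int[mu]_x (phi v2 (u - x) * expR (qq v2 u)).
  rewrite /fY !(Rint_TD supp) 1?[RHS]RintegralZr//.
  - apply: (integrable_D mu (M := (Num.sqrt (2 * pi * v2))^-1)).
      exact: measurable_phi_shift.
    by move=> x _; rewrite ger0_norm ?phi_ge0// phi_ub.
  - by apply: measurable_funM => //; exact: measurable_phi_shift.
  - exact: measurable_phi_shift.
have mmE u : mm v2 u = ln (fY mu v2 u * expR (qq v2 u)).
  by rewrite lnM ?expRK// posrE ?expR_gt0 ?fY_gt0.
rewrite !mmE ler_ln ?posrE ?mulr_gt0 ?expR_gt0 ?fY_gt0// !key.
apply: (@Rint_le _ mu Rr supp _ _ ((Num.sqrt (2 * pi * v2))^-1 * expR (qq v2 w))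
   ((Num.sqrt (2 * pi * v2))^-1 * expR (qq v2 w'))).
- by apply: measurable_funM => //; exact: measurable_phi_shift.
- by apply: measurable_funM => //; exact: measurable_phi_shift.
- move=> x _; rewrite ger0_norm ?mulr_ge0 ?phi_ge0 ?expR_ge0//.
  by rewrite ler_wpM2r ?expR_ge0// phi_ub.
- move=> x _; rewrite ger0_norm ?mulr_ge0 ?phi_ge0 ?expR_ge0//.
  by rewrite ler_wpM2r ?expR_ge0// phi_ub.
move=> x /Dnorm xR.
have xR' : - Rr <= x by move: xR; rewrite ler_norml => /andP[].
rewrite /phi /qq -!mulrA ![_^-1 * expR _]mulrC !mulrA -!expRD.
rewrite ler_wpM2r ?invr_ge0 ?sqrtr_ge0// ler_expR -!mulrDl.
rewrite ler_pM2r ?invr_gt0 ?mulr_gt0//.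
nra.
Qed.

Lemma mm_measurable v2 (B : R) : 0 < v2 -> measurable_fun setT (fun n => mm v2 (B + n)).
Proof.
move=> v0; apply: nondecreasing_measurable => // x y xy.
by apply: mm_nd => //; rewrite lerD2l.
Qed.

End fY_lemmas.
Section deriv.
Context {R : realType}.

Lemma is_derive_sq (x : R) : is_derive x 1 (fun n : R => n ^+ 2) (2 * x).
Proof.
have h := is_deriveX 2 (is_derive_id x 1).
have -> : (fun n : R => n ^+ 2) = id ^+ 2 by apply/funext => n /=; rewrite !expr2.
apply: (is_derive_eq h).
by rewrite /= expr1; exact: mulr1.
Qed.

Lemma is_derive_scal (k : R) (f : R -> R) (x df : R) : is_derive x 1 f df ->
  is_derive x 1 (fun n => k * f n) (k * df).
Proof.
move=> h; have -> : (fun n => k * f n) = k \*: f by apply/funext.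
exact: is_deriveZ.
Qed.

Lemma is_derive_mul (f g : R -> R) (x df dg : R) : is_derive x 1 f df ->
  is_derive x 1 g dg -> is_derive x 1 (fun n => f n * g n) (f x * dg + g x * df).
Proof.
move=> hf hg; have -> : (fun n => f n * g n) = f * g by apply/funext.
exact: is_deriveM.
Qed.

Lemma is_derive_expcomp (g : R -> R) (x dg : R) : is_derive x 1 g dg ->
  is_derive x 1 (fun n => expR (g n)) (expR (g x) * dg).
Proof.
move=> hg; exact: (is_derive1_comp (f := expR) (g := g)).
Qed.

Lemma is_derive_phi (s x : R) : 0 < s -> is_derive x 1 (phi s) (- x / s * phi s x).
Proof.
move=> s0.
have hg : is_derive x 1 (fun n : R => - (n ^+ 2) / (2 * s)) (- (2 * s)^-1 * (2 * x)).
  have -> : (fun n : R => - (n ^+ 2) / (2 * s)) = (fun n => - (2 * s)^-1 * n ^+ 2).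
    by apply/funext => n; rewrite mulNr mulNr mulrC.
  exact: is_derive_scal (is_derive_sq x).
have h := is_derive_mul (is_derive_expcomp hg) (is_derive_cst (Num.sqrt (2 * pi * s))^-1 x 1).
have -> : phi s = (fun n => expR (- n ^+ 2 / (2 * s)) * cst (Num.sqrt (2 * pi * s))^-1 n).
  by apply/funext.
apply: (is_derive_eq h).
rewrite /phi /= mulr0 add0r.
field.
by rewrite gt_eqF ?sqrtr_gt0 ?mulr_gt0 ?pi_gt0// gt_eqF.
Qed.

End deriv.
Section gauss.
Context {R : realType}.
Local Notation mu := (@lebesgue_measure R).
Variable s : R.
Hypothesis s0 : 0 < s.

Lemma phi_normal : phi s = normal_pdf 0 (Num.sqrt s).
Proof.
rewrite normal_pdfE ?gt_eqF ?sqrtr_gt0//; apply/funext => x.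
rewrite /phi /normal_peak /normal_fun subr0 sqr_sqrtr ?ltW// mulrC.
have -> : s *+ 2 = 2 * s by rewrite mulr_natl.
have -> : s * pi *+ 2 = 2 * pi * s by rewrite -mulr_natl mulrA mulrAC.
by [].
Qed.

Lemma int_phi : (\int[mu]_x (phi s x)%:E = 1)%E.
Proof. by rewrite phi_normal integral_normal_pdf. Qed.

Lemma set_ge0_itv : [set x : R | 0 <= x] = `[0%R, +oo[%classic.
Proof. by apply/seteqP; split => x/=; rewrite in_itv/= andbT. Qed.

Lemma phi_even x : phi s (- x) = phi s x.
Proof. by rewrite /phi sqrrN. Qed.

Lemma int0y_phi : (\int[mu]_(x in `[0%R, +oo[) (phi s x)%:E = (2^-1)%:E)%E.
Proof.
have := int_phi; rewrite ge0_symfun_integralT; last 3 first.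
- by move=> x; exact: phi_ge0.
- exact: continuous_phi.
- by move=> x /=; rewrite phi_even.
rewrite set_ge0_itv.
have : (0 <= \int[mu]_(x in `[0%R, +oo[) (phi s x)%:E)%E.
  by apply: integral_ge0 => x _; rewrite lee_fin phi_ge0.
case: (\int[mu]_(x in `[0%R, +oo[) (phi s x)%:E)%E => [r| |]//= r0.
move=> /eqP; rewrite -EFinM eqe => /eqP h.
  have h2 : (2:R) != 0 by rewrite pnatr_eq0.
  by congr EFin; rewrite -[r](mulKf h2) h mulr1.
by rewrite mulry gtr0_sg ?mul1e.
Qed.

Definition Fp (x : R) := x * phi s x.
Definition fp (x : R) := phi s x - x ^+ 2 * phi s x / s.

Lemma is_derive_Fp (x : R) : is_derive x (1:R) Fp (fp x).
Proof.
have h := is_derive_mul (is_derive_id x (1:R)) (is_derive_phi x s0).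
have -> : Fp = (fun n => id n * phi s n) by [].
apply: (is_derive_eq h).
by rewrite /fp /=; field; rewrite gt_eqF.
Qed.

Lemma continuous_fp : continuous fp.
Proof.
move=> x; apply: cvgB; first exact: continuous_phi.
apply: cvgM; last exact: cvg_cst.
apply: cvgM; last exact: continuous_phi.
exact: exprn_continuous.
Qed.

Lemma continuous_Fp : continuous Fp.
Proof.
move=> x; apply: cvgM; first exact: cvg_id.
exact: continuous_phi.
Qed.

Lemma FTC_fp b : 0 < b -> (\int[mu]_(x in `[0%R, b]) (fp x)%:E = (Fp b)%:E)%E.
Proof.
move=> b0; rewrite (continuous_FTC2 b0 (F := Fp)).
- by rewrite /Fp mul0r sube0.
- by apply: continuous_subspaceT; exact: continuous_fp.
- split.
  + by move=> x _; have H := is_derive_Fp x; exact: ex_derive.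
  + by apply: cvg_at_right_filter; exact: continuous_Fp.
  + by apply: cvg_at_left_filter; exact: continuous_Fp.
- move=> x _; rewrite derive1E; have H := is_derive_Fp x; exact: derive_val.
Qed.

End gauss.
Section gauss2.
Context {R : realType}.
Local Notation mu := (@lebesgue_measure R).
Variable s : R.
Hypothesis s0 : 0 < s.

Lemma integrable_itv (f : R -> R) (b : R) : continuous f ->
  mu.-integrable `[0%R, b] (EFin \o f).
Proof.
move=> cf; apply: continuous_compact_integrable; first exact: segment_compact.
by apply: continuous_subspaceT.
Qed.

Lemma continuous_sqphi : continuous (fun x : R => x ^+ 2 * phi s x).
Proof.
move=> x; apply: cvgM; last exact: continuous_phi.
exact: exprn_continuous.
Qed.

Lemma Q_le b : 0 < b ->
  (\int[mu]_(x in `[0%R, b]) (x ^+ 2 * phi s x)%:E <= (s / 2)%:E)%E.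
Proof.
move=> b0.
have iphi := integrable_itv b (@continuous_phi R s).
have isq := integrable_itv b continuous_sqphi.
have h1 : \int[mu]_(x in `[0%R, b]) fp s x = Fp s b.
  by rewrite /Rintegral FTC_fp.
have h2 : \int[mu]_(x in `[0%R, b]) fp s x =
   \int[mu]_(x in `[0%R, b]) phi s x - \int[mu]_(x in `[0%R, b]) (x ^+ 2 * phi s x) / s.
  rewrite /fp RintegralB//; first by rewrite RintegralZr.
  apply: integrable_itv => x; apply: cvgM; last exact: cvg_cst.
  exact: continuous_sqphi.
have hA : \int[mu]_(x in `[0%R, b]) phi s x <= 2^-1.
  rewrite -lee_fin /Rintegral fineK; last exact: integrable_fin_num.
  rewrite -(int0y_phi s0); apply: ge0_subset_integral => //.
  - apply/measurable_EFinP; apply: measurable_funTS; exact: measurable_phi.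
  - by move=> x _; rewrite lee_fin phi_ge0.
  - exact: subset_itvl.
have hF : 0 <= Fp s b by rewrite /Fp mulr_ge0 ?phi_ge0 ?ltW.
have hQ : \int[mu]_(x in `[0%R, b]) (x ^+ 2 * phi s x) <= s / 2.
  have e : \int[mu]_(x in `[0%R, b]) (x ^+ 2 * phi s x) =
     s * (\int[mu]_(x in `[0%R, b]) phi s x - Fp s b).
    by rewrite -h1 h2; field; rewrite gt_eqF.
  rewrite e mulrC ler_pdivlMr// ?ltr0n//.
  set A := \int[mu]_(x in _) _ in hA *.
  have : (A - Fp s b) * 2 <= 1 by lra.
  move=> h; rewrite -mulrA [s * 2]mulrC mulrA.
  by rewrite -[leRHS]mul1r ler_pM2r.
move: hQ; rewrite -lee_fin /Rintegral fineK//.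
exact: integrable_fin_num.
Qed.

Lemma int0y_sq : (\int[mu]_(x in `[0%R, +oo[) (x ^+ 2 * phi s x)%:E <= (s / 2)%:E)%E.
Proof.
have f0 x : 0 <= x ^+ 2 * phi s x by rewrite mulr_ge0 ?sqr_ge0 ?phi_ge0.
have mf : measurable_fun setT (fun x : R => x ^+ 2 * phi s x).
  by apply: measurable_funM; [exact: measurable_funX | exact: measurable_phi].
have hc := ge0_cvgn_integral (mu := mu) f0 mf.
rewrite -(cvg_lim _ hc)//.
apply: lime_le; first exact: (cvgP _ hc).
near=> n; apply: Q_le.
by rewrite ltr0n; near: n; exists 1%N.
Unshelve. all: by end_near.
Qed.

Lemma int_sq : (\int[mu]_x (x ^+ 2 * phi s x)%:E <= s%:E)%E.
Proof.
rewrite ge0_symfun_integralT; last 3 first.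
- by move=> x; rewrite mulr_ge0 ?sqr_ge0 ?phi_ge0.
- exact: continuous_sqphi.
- by move=> x /=; rewrite phi_even sqrrN.
rewrite set_ge0_itv.
apply: (@le_trans _ _ (2%:E * (s / 2)%:E)%E).
  by rewrite lee_pmul2l ?int0y_sq// lte_fin ltr0n.
by rewrite -EFinM mulrC -mulrA mulVf ?mulr1 ?pnatr_eq0.
Qed.

End gauss2.
Section refl.
Context {R : realType}.
Local Notation mu := (@lebesgue_measure R).

Lemma integral_refl (h : R -> \bar R) : measurable_fun setT h ->
  (forall x, (0 <= h x)%E) -> (\int[mu]_x h (- x)%R = \int[mu]_x h x)%E.
Proof.
move=> mh h0.
have mN : measurable_fun (setT : set (measurableTypeR R)) (-%R : measurableTypeR R -> measurableTypeR R).
  exact: measurable_funN.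
have := ge0_integral_pushforward mN mu (D := setT) (f := h) measurableT mh (fun y _ => h0 y).
rewrite preimage_setT => <-.
apply: eq_measure_integral => A mA _.
exact: (lebesgue_measureN mA).
Qed.

Lemma maxN0 (x : R) : Num.max (- x) 0 = Num.max x 0 - x.
Proof.
have [x0|x0] := leP 0 x.
  by rewrite (max_idPr _) ?(max_idPl _) ?subrr// oppr_le0.
by rewrite (max_idPl _) ?(max_idPr _) ?sub0r// ?oppr_ge0 ltW.
Qed.

End refl.
Section Jbound.
Context {R : realType} (mu : probability R R) (Rr v1 v2 B : R).
Hypothesis supp : supported mu Rr.
Hypothesis Rr0 : 0 < Rr.
Hypothesis v10 : 0 < v1.
Hypothesis v12 : v1 < v2.
Hypothesis B0 : 0 <= B.
Local Notation lmu := (@lebesgue_measure R).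

Let s := v2 - v1.
Let a := B + Rr.
Let s0 : 0 < s. Proof. by rewrite /s subr_gt0. Qed.
Let v20 : 0 < v2. Proof. exact: lt_trans v12. Qed.

Definition ff (n : R) := n * ln (fY mu v2 (B + n)) * phi (v2 - v1) n.

Lemma ff_eq n : ff n = n * (mm mu Rr v2 (B + n) - qq Rr v2 (B + n)) * phi (v2 - v1) n.
Proof. by rewrite /ff /mm addrK. Qed.

Lemma measurable_ff : measurable_fun setT ff.
Proof.
have -> : ff = (fun n => n * (mm mu Rr v2 (B + n) - qq Rr v2 (B + n)) * phi (v2 - v1) n).
  by apply/funext => n; rewrite ff_eq.
apply: measurable_funM; last exact: measurable_phi.
apply: measurable_funM => //; apply: measurable_funB.
  exact: (mm_measurable supp).
rewrite /qq; apply: measurable_funM => //; apply: measurable_funX.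
by apply: measurable_funD => //; apply: measurable_funD.
Qed.

Lemma ff_sym n : - (2 * a / v2 * (n ^+ 2 * phi s n)) <= ff n + ff (- n).
Proof.
rewrite !ff_eq phi_even -/s.
set d := mm mu Rr v2 (B + n) - mm mu Rr v2 (B + - n).
have hd : 0 <= n * d.
  have [n0|n0] := leP 0 n.
    rewrite mulr_ge0// subr_ge0; apply: (mm_nd supp) => //.
    by rewrite lerD2l lerNl (le_trans _ n0)// oppr_le0.
  apply: mulr_le0; first exact: ltW.
  rewrite subr_le0; apply: (mm_nd supp) => //.
  by rewrite lerD2l lerNr ltW// (lt_le_trans n0)// oppr_ge0 ltW.
have E : n * (mm mu Rr v2 (B + n) - qq Rr v2 (B + n)) * phi s n +
    - n * (mm mu Rr v2 (B + - n) - qq Rr v2 (B + - n)) * phi s n =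
    n * d * phi s n - 2 * a / v2 * (n ^+ 2 * phi s n).
  rewrite /d /qq /a; field; by rewrite gt_eqF.
rewrite E.
have : 0 <= n * d * phi s n by rewrite mulr_ge0 ?phi_ge0.
lra.
Qed.

Lemma J_ge : - (a * s / v2) <= \int[lmu]_n ff n.
Proof.
pose F := fun n => (ff n)%:E.
have mF : measurable_fun setT F by apply/measurable_EFinP; exact: measurable_ff.
have mFp : measurable_fun setT (F^\+)%E := measurable_funepos mF.
have mFn : measurable_fun setT (F^\-)%E := measurable_funeneg mF.
have mN : measurable_fun setT (-%R : R -> R) by exact: measurable_funN.
have mFpN : measurable_fun setT (fun n : R => (F^\+)%E (- n)%R).
  exact: (measurableT_comp mFp mN).
have mFnN : measurable_fun setT (fun n : R => (F^\-)%E (- n)%R).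
  exact: (measurableT_comp mFn mN).
pose g0 := fun n => 2 * a / v2 * (n ^+ 2 * phi s n).
have g00 n : 0 <= g0 n.
  have a0 : 0 <= a by rewrite /a addr_ge0// ltW.
  rewrite /g0; apply: mulr_ge0; last by rewrite mulr_ge0 ?sqr_ge0 ?phi_ge0.
  by rewrite divr_ge0 ?mulr_ge0// ltW.
have mg0' : measurable_fun setT g0.
  rewrite /g0; apply: measurable_funM; first exact: measurable_cst.
  by apply: measurable_funM; [exact: measurable_funX | exact: measurable_phi].
have mg0 : measurable_fun setT (fun n => (g0 n)%:E).
  exact/measurable_EFinP.
have Hpt n : ((F^\-)%E n + (F^\-)%E (- n)%R <= (F^\+)%E n + (F^\+)%E (- n)%R + (g0 n)%:E)%E.
  rewrite !funeposE !funenegE /F -!EFinN -!EFin_max -!EFinD lee_fin !maxN0.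
  have := ff_sym n; rewrite -/(g0 n) => h; lra.
pose P := (\int[lmu]_n (F^\+)%E n)%E.
pose N := (\int[lmu]_n (F^\-)%E n)%E.
pose G := (\int[lmu]_n (g0 n)%:E)%E.
have P0 : (0 <= P)%E by apply: integral_ge0 => x _; exact: funepos_ge0.
have N0 : (0 <= N)%E by apply: integral_ge0 => x _; exact: funeneg_ge0.
have Fp0 x : (0 <= (F^\+)%E x)%E by exact: funepos_ge0.
have Fn0 x : (0 <= (F^\-)%E x)%E by exact: funeneg_ge0.
have eN : (\int[lmu]_n ((F^\-)%E n + (F^\-)%E (- n)%R) = N + N)%E.
  rewrite ge0_integralD//; try (by move=> x _; exact: Fn0).
  by rewrite integral_refl.
have eP : (\int[lmu]_n ((F^\+)%E n + (F^\+)%E (- n)%R + (g0 n)%:E) = P + P + G)%E.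
  rewrite ge0_integralD//; try (by move=> x _; rewrite ?adde_ge0 ?lee_fin).
  2: exact: emeasurable_funD.
  rewrite ge0_integralD//; try (by move=> x _; exact: Fp0).
  by rewrite integral_refl.
have I1 : (N + N <= P + P + G)%E.
  rewrite -eN -eP; apply: ge0_le_integral => //.
  all: try (by move=> x _; rewrite adde_ge0).
  all: try (by move=> x _; exact: Hpt).
  all: try (by apply: emeasurable_funD => //; exact: emeasurable_funD).
have a0 : 0 <= a by rewrite /a addr_ge0// ltW.
have c0 : 0 <= 2 * a / v2 by rewrite divr_ge0 ?mulr_ge0// ltW.
have G0 : (0 <= G)%E by apply: integral_ge0 => x _; rewrite lee_fin.
have Gle : (G <= (2 * a / v2 * s)%:E)%E.
  have -> : G = ((2 * a / v2)%:E * \int[lmu]_n (n ^+ 2 * phi s n)%:E)%E.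
    rewrite -ge0_integralZl//.
    - apply/measurable_EFinP.
      by apply: measurable_funM; [exact: measurable_funX | exact: measurable_phi].
    - by move=> x _; rewrite lee_fin mulr_ge0 ?sqr_ge0 ?phi_ge0.
  rewrite [X in (_ <= X)%E]EFinM; apply: lee_wpmul2l; first by rewrite lee_fin.
  exact: (int_sq s0).
rewrite /Rintegral integralE -/P -/N.
have as0 : 0 <= a * s / v2 by rewrite divr_ge0 ?mulr_ge0// ltW.
have e2 : 2 * a / v2 * s = 2 * (a * s / v2) by ring.
rewrite e2 in Gle.
clear eP eN; clearbody P N G.
move: P N G P0 N0 G0 I1 Gle => [p| |] [n| |] [g| |] //=.
all: rewrite ?lee_fin ?lte_fin.
all: try (by move=> *; rewrite oppr_le0).
move=> p0 n0 g0' I Gl.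

lra.
Qed.

End Jbound.
Section complex_part.
Context {R : realType}.
Local Open Scope complex_scope.

Lemma Rintegral_zero d (T : measurableType d) (m : {measure set T -> \bar R}) :
  \int[m]_(x in setT) (0 : R) = 0.
Proof. by rewrite /Rintegral integral0. Qed.

Lemma expC_real (a : R) : expC a%:C = (expR a)%:C.
Proof. by rewrite /expC /= cos0 sin0 mulr1 mulr0. Qed.

Lemma phiC_real (v w : R) : phiC v w%:C = (phi v w)%:C.
Proof.
rewrite /phiC -rmorphM -rmorphN -fmorph_div expC_real -fmorph_div /phi.
by rewrite expr2.
Qed.

Lemma EC_real (mu : probability R R) (F : R -> R) :
  EC mu (fun x => (F x)%:C) = (\int[mu]_x F x)%:C.
Proof. by rewrite /EC /= Rintegral_zero. Qed.

Lemma EN_real (v : R) (G : R -> R) :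
  EN v (fun n => (G n)%:C) = (\int[lebesgue_measure]_n (G n * phi v n))%:C.
Proof.
rewrite /EN /=.
have -> : (fun n : R => 0 * phi v n) = (fun _ => 0) by apply/funext => n; rewrite mul0r.
by rewrite Rintegral_zero.
Qed.

Lemma cabs_real (a : R) : cabs a%:C = `|a|.
Proof. by rewrite /cabs /= expr0n addr0 sqrtr_sqr. Qed.

Lemma LogC_real (a : R) : 0 < a -> LogC a%:C = (ln a)%:C.
Proof.
move=> a0; rewrite /LogC /ArgC cabs_real /= gt_eqF//= lexx ger0_norm ?ltW//.
by rewrite divff ?gt_eqF// acos1.
Qed.

Lemma hC_real (mu : probability R R) (Rr v1 v2 B : R) :
  supported mu Rr -> 0 < v2 ->
  hC mu v1 v2 B%:C =
  (v1 * fY mu v1 B * \int[lebesgue_measure]_n (n * ln (fY mu v2 (B + n)) * phi (v2 - v1) n)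
     / (v2 - v1)
   - \int[mu]_x (x * phi v1 (B - x)) + B * fY mu v1 B)%:C.
Proof.
move=> supp v20.
have e1 : fYC mu v1 B%:C = (fY mu v1 B)%:C.
  rewrite /fYC.
  have -> : (fun x : R => phiC v1 (B%:C - x%:C)) = (fun x => (phi v1 (B - x))%:C).
    by apply/funext => x; rewrite -rmorphB phiC_real.
  by rewrite EC_real.
have e2 n : fYC mu v2 (B%:C + n%:C) = (fY mu v2 (B + n))%:C.
  rewrite /fYC.
  have -> : (fun x : R => phiC v2 (B%:C + n%:C - x%:C)) = (fun x => (phi v2 (B + n - x))%:C).
    by apply/funext => x; rewrite -rmorphD -rmorphB phiC_real.
  by rewrite EC_real.
have e3 : EN (v2 - v1) (fun n => n%:C * LogC (fYC mu v2 (B%:C + n%:C))) =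
    (\int[lebesgue_measure]_n (n * ln (fY mu v2 (B + n)) * phi (v2 - v1) n))%:C.
  have -> : (fun n : R => n%:C * LogC (fYC mu v2 (B%:C + n%:C))) =
      (fun n => (n * ln (fY mu v2 (B + n)))%:C).
    by apply/funext => n; rewrite e2 LogC_real ?rmorphM// (fY_gt0 supp).
  by rewrite EN_real.
have e4 : EC mu (fun x => x%:C * phiC v1 (B%:C - x%:C)) =
    (\int[mu]_x (x * phi v1 (B - x)))%:C.
  have -> : (fun x : R => x%:C * phiC v1 (B%:C - x%:C)) = (fun x => (x * phi v1 (B - x))%:C).
    by apply/funext => x; rewrite -rmorphB phiC_real -rmorphM.
  by rewrite EC_real.
rewrite /hC e1 e3 e4.
by rewrite !(rmorphM, rmorphB, rmorphD, fmorphV).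
Qed.

End complex_part.
Unset Implicit Arguments.
Local Close Scope classical_set_scope.
Local Open Scope ring_scope.
Theorem lemma9 (R : realType) (Rr v1 v2 : R) (mu : probability R R) :
  0 < Rr -> 0 < v1 -> v1 < v2 ->
  secrecy_maximizer mu v1 v2 Rr ->
  forall B : R, Rr * (v2 + v1) / (v2 - v1) <= B ->
  exists z : R[i], cabs z <= B /\
    ((1 - v1 / v2) * B - (1 + v1 / v2) * Rr)
      * (expR (- ((B + Rr) ^+ 2) / (2 * v1)) / Num.sqrt (2 * pi * v1))
    <= cabs (hC mu v1 v2 z).
Proof.
move=> Rr0 v10 v12 [supp _] B hB.
have v20 : 0 < v2 := lt_trans v10 v12.
have s0 : 0 < v2 - v1 by rewrite subr_gt0.
have B0 : 0 <= B.
  apply: le_trans hB; apply: ltW; apply: divr_gt0 => //.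
  by rewrite mulr_gt0// addr_gt0.
exists (B%:C)%C; split; first by rewrite cabs_real ger0_norm.
rewrite (@hC_real R mu Rr v1 v2 B supp v20) cabs_real.
set F1 := fY mu v1 B.
set J := \int[lebesgue_measure]_n _.
set G := \int[mu]_x _.
set ph := expR _ / _.
have hph : ph = phi v1 (B + Rr) by [].
have ph0 : 0 <= ph by rewrite hph phi_ge0.
have hF1 : ph <= F1 by rewrite hph -{1}(ger0_norm B0); exact: (fY_ge supp).
have hJ : - ((B + Rr) * (v2 - v1) / v2) <= J by exact: (J_ge supp).
have hG : G <= Rr * F1.
  have ub := phi_ub (B - 0) v10.
  set U := (Num.sqrt (2 * pi * v1))^-1 in ub.
  have hU x : phi v1 (B - x) <= U by exact: phi_ub.
  have -> : Rr * F1 = \int[mu]_x (Rr * phi v1 (B - x)).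
    rewrite /F1 /fY !(Rint_TD supp); last 2 first.
    - by apply: measurable_funM => //; exact: measurable_phi_shift.
    - exact: measurable_phi_shift.
    rewrite RintegralZl//; apply: (integrable_D mu (M := U)).
      exact: measurable_phi_shift.
    by move=> x _; rewrite ger0_norm ?phi_ge0.
  apply: (Rint_le supp (Mf := Rr * U) (Mg := Rr * U)).
  - by apply: measurable_funM => //; exact: measurable_phi_shift.
  - by apply: measurable_funM => //; exact: measurable_phi_shift.
  - move=> x /Dnorm xR; rewrite normrM (ger0_norm (phi_ge0 _ _)).
    by rewrite ler_pM ?normr_ge0 ?phi_ge0 ?hU.
  - move=> x _; rewrite ger0_norm; last by rewrite mulr_ge0 ?phi_ge0// ltW.
    by apply: ler_wpM2l; [exact: ltW | exact: hU].
  - move=> x /Dnorm xR; rewrite ler_wpM2r ?phi_ge0//.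
    by rewrite (le_trans (ler_norm x)).
set K := (1 - v1 / v2) * B - (1 + v1 / v2) * Rr.
have K0 : 0 <= K.
  rewrite /K.
  have e : (1 - v1 / v2) * B - (1 + v1 / v2) * Rr = ((v2 - v1) * B - (v2 + v1) * Rr) / v2.
    by field; rewrite gt_eqF.
  rewrite e; apply: divr_ge0; last exact: ltW.
  rewrite subr_ge0; move: hB; rewrite ler_pdivrMr// => h.
  by rewrite mulrC (le_trans h)// mulrC.
set X := v1 * J / (v2 - v1) + B - Rr.
have hX : K <= X.
  have hJ' : - (v1 * (B + Rr) / v2) <= v1 * J / (v2 - v1).
    have e : - (v1 * (B + Rr) / v2) = v1 * (- ((B + Rr) * (v2 - v1) / v2)) / (v2 - v1).
      by field; rewrite !gt_eqF.
    rewrite e ler_pM2r ?invr_gt0// ler_pM2l//.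
  have e : K = B - Rr - v1 * (B + Rr) / v2.
    by rewrite /K; field; rewrite gt_eqF.
  rewrite /X e; lra.
have eH : v1 * F1 * J / (v2 - v1) - G + B * F1 = F1 * (X + Rr) - G.
  by rewrite /X; field; rewrite gt_eqF.
rewrite (le_trans _ (ler_norm _))// eH.
have F10 : 0 <= F1 := le_trans ph0 hF1.
nra.
Qed.
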